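(* Let $k\in\mathbb N$, $0<p,q\le\infty$, $\alpha\in\mathbb R$, $\beta\in J_p$, $\delta>0$, and $0<\varepsilon\le\min\{2k^2\delta^2,1\}$. Then the function $f(x)=\lambda(x-1+\varepsilon)_+^{k-1}$ with $\lambda=\varepsilon^{-k-\beta-1/p+1}$ satisfies $f\in\mathbb M^k$, $\|w_{\alpha,\beta}f\|_p\sim1$, and \[ \omega_\varphi^k(f,\delta)_{w_{\alpha,\beta},q}\ge c\,\varepsilon^{1/q-1/p}, \] with constants independent of $\varepsilon$ and $\delta$.
   Context: For $x\in[-1,1]$, $\varphi(x)=\sqrt{1-x^2}$, $w_{\alpha,\beta}(x)=(1+x)^\alpha(1-x)^\beta$; $\|\cdot\|_p$ is the $L_p[-1,1]$ (quasi)norm, $\|g\|_{L_q(S)}$ over $S$; $J_p=(-1/p,\infty)$ if $p<\infty$, $J_\infty=[0,\infty)$; $u_+=\max\{u,0\}$ (with $u_+^0$ the indicator of $u>0$... i.e. of $u\ge0$ up to a point). $\Delta_h^k(f,x)=\sum_{i=0}^k\binom ki(-1)^{k-i}f(x-kh/2+ih)$ if $x\pm kh/2\in[-1,1]$, else $0$; $\overrightarrow\Delta_h^k(f,x)=\Delta_h^k(f,x+kh/2)$, $\overleftarrow\Delta_h^k(f,x)=\Delta_h^k(f,x-kh/2)$. For a weight $w$: $\Omega_\varphi^k(f,\delta)_{w,q}=\sup_{0<h\le\delta}\|w(x)\Delta^k_{h\varphi(x)}(f,x)\|_{L_q[-1+2k^2h^2,1-2k^2h^2]}$, $\overrightarrow\Omega_\varphi^k(f,\delta)_{w,q}=\sup_{0<h\le2k^2\delta^2}\|w\overrightarrow\Delta_h^k(f,\cdot)\|_{L_q[-1,-1+2k^2\delta^2]}$,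 $\overleftarrow\Omega_\varphi^k(f,\delta)_{w,q}=\sup_{0<h\le2k^2\delta^2}\|w\overleftarrow\Delta_h^k(f,\cdot)\|_{L_q[1-2k^2\delta^2,1]}$, $\omega_\varphi^k=\Omega_\varphi^k+\overrightarrow\Omega_\varphi^k+\overleftarrow\Omega_\varphi^k$. $\mathbb M^k$: functions on $(-1,1)$ with all $k$th divided differences at distinct points nonnegative. $F\sim G$ means two-sided bounds with positive constants independent of $\varepsilon,\delta$. *)

(* Defs.v *)
From HB Require Import structures.
From mathcomp Require Import all_boot all_order all_algebra.
From mathcomp Require Import all_classical all_reals all_analysis.
Set Implicit Arguments. Unset Strict Implicit. Unset Printing Implicit Defensive.
Import Order.TTheory GRing.Theory Num.Theory.
Import numFieldNormedType.Exports.
Local Open Scope classical_set_scope.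
Local Open Scope ring_scope.

Section Defs.
Variable R : realType.

Definition phi (x : R) : R := Num.sqrt (1 - x ^+ 2).

Definition wab (alpha beta : R) (x : R) : R := (1 + x) `^ alpha * (1 - x) `^ beta.

(* u_+^n ; for n = 0 this is the indicator of u > 0 *)
Definition pospow (u : R) (n : nat) : R := if 0 < u then u ^+ n else 0.

Definition invp (p : \bar R) : R :=
  match p with r%:E => r^-1 | _ => 0 end.

Definition in_J (p : \bar R) (beta : R) : Prop :=
  if p is +oo%E then 0 <= beta else - invp p < beta.

Definition normL (q : \bar R) (S : set R) (g : R -> R) : \bar R :=
  Lnorm (@lebesgue_measure R) q (fun x => (\1_S x * g x)%:E).

Definition norm11 (q : \bar R) (g : R -> R) : \bar R :=
  normL q [set x | -1 <= x <= 1] g.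

Definition Delta (k : nat) (h : R) (f : R -> R) (x : R) : R :=
  if [&& -1 <= x - k%:R * h / 2 <= 1 & -1 <= x + k%:R * h / 2 <= 1]
  then \sum_(i < k.+1) ('C(k, i)%:R * (-1) ^+ (k - i) * f (x - k%:R * h / 2 + i%:R * h))
  else 0.

Definition Delta_fwd (k : nat) (h : R) (f : R -> R) (x : R) : R :=
  Delta k h f (x + k%:R * h / 2).
Definition Delta_bwd (k : nat) (h : R) (f : R -> R) (x : R) : R :=
  Delta k h f (x - k%:R * h / 2).

Definition Omega (k : nat) (f : R -> R) (delta : R) (w : R -> R) (q : \bar R) : \bar R :=
  ereal_sup [set y | exists2 h : R, 0 < h <= delta &
    y = normL q [set x | -1 + 2 * k%:R ^+ 2 * h ^+ 2 <= x <= 1 - 2 * k%:R ^+ 2 * h ^+ 2]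
          (fun x => w x * Delta k (h * phi x) f x)].

Definition Omega_fwd (k : nat) (f : R -> R) (delta : R) (w : R -> R) (q : \bar R) : \bar R :=
  ereal_sup [set y | exists2 h : R, 0 < h <= 2 * k%:R ^+ 2 * delta ^+ 2 &
    y = normL q [set x | -1 <= x <= -1 + 2 * k%:R ^+ 2 * delta ^+ 2]
          (fun x => w x * Delta_fwd k h f x)].

Definition Omega_bwd (k : nat) (f : R -> R) (delta : R) (w : R -> R) (q : \bar R) : \bar R :=
  ereal_sup [set y | exists2 h : R, 0 < h <= 2 * k%:R ^+ 2 * delta ^+ 2 &
    y = normL q [set x | 1 - 2 * k%:R ^+ 2 * delta ^+ 2 <= x <= 1]
          (fun x => w x * Delta_bwd k h f x)].

Definition omega (k : nat) (f : R -> R) (delta : R) (w : R -> R) (q : \bar R) : \bar R :=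
  (Omega k f delta w q + Omega_fwd k f delta w q + Omega_bwd k f delta w q)%E.

(* divided difference [x_0,...,x_n; f] at distinct nodes (explicit formula) *)
Definition divdiff (n : nat) (f : R -> R) (x : 'I_n.+1 -> R) : R :=
  \sum_(i < n.+1) f (x i) / \prod_(j < n.+1 | j != i) (x i - x j).

Definition inMk (k : nat) (f : R -> R) : Prop :=
  forall x : 'I_k.+1 -> R, injective x -> (forall i, -1 < x i < 1) ->
    0 <= divdiff f x.

Definition fex (k : nat) (p : \bar R) (beta eps : R) (x : R) : R :=
  eps `^ (- k%:R - beta - invp p + 1) * pospow (x - 1 + eps) k.-1.

End Defs.

(* Main.v *)
Require Import Defs.
From HB Require Import structures.
From mathcomp Require Import all_boot all_order all_algebra.
From mathcomp Require Import all_classical all_reals all_analysis.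
From mathcomp Require Import ring lra ess_sup_inf.
Import Order.TTheory GRing.Theory Num.Theory.
Import numFieldNormedType.Exports.
Local Open Scope classical_set_scope.
Local Open Scope ring_scope.


Section DD.
Variable R : realType.
Implicit Types (f g h : R -> R) (s L : seq R).

Definition Dd f L : R := \sum_(x <- L) f x / \prod_(y <- L | y != x) (x - y).

Lemma Dd_perm f s t : perm_eq s t -> Dd f s = Dd f t.
Proof.
move=> st; rewrite /Dd (perm_big _ st); apply: eq_bigr => x _.
by rewrite (perm_big _ st).
Qed.

Lemma Dd_ext f g L : {in L, f =1 g} -> Dd f L = Dd g L.
Proof. by move=> fg; rewrite /Dd; apply: eq_big_seq => x xL; rewrite fg. Qed.

Lemma Dd_scale c f L : Dd (fun x => c * f x) L = c * Dd f L.
Proof. by rewrite /Dd mulr_sumr; apply: eq_bigr => x _; rewrite mulrA. Qed.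

Lemma Dd0 L : Dd (fun=> 0) L = 0.
Proof. by rewrite /Dd big1 // => x _; rewrite mul0r. Qed.

Lemma Dd_lin a h x0 s : uniq (x0 :: s) ->
  Dd (fun x => (x - a) * h x) (x0 :: s) = (x0 - a) * Dd h (x0 :: s) + Dd h s.
Proof.
move=> /= /andP[x0s us].
have -> : Dd (fun x => (x - a) * h x) (x0 :: s) =
   Dd (fun x => (x0 - a) * h x) (x0 :: s) + Dd (fun x => (x - x0) * h x) (x0 :: s).
  rewrite /Dd -big_split /=; apply: eq_bigr => x _.
  by rewrite -mulrDl -mulrDl; congr (_ * _ / _); ring.
rewrite Dd_scale; congr (_ + _).
rewrite /Dd big_cons subrr mul0r mul0r add0r big_seq [RHS]big_seq.
apply: eq_bigr => x xs.
have xx0 : x0 != x by apply: contraNneq x0s => ->.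
rewrite big_cons xx0 /=.
have : x - x0 != 0 by rewrite subr_eq0 eq_sym.
move=> nz.
by rewrite invfM mulrA -[(x - x0) * h x * _]mulrA [h x * _]mulrC mulrA mulfV // mul1r.
Qed.

Lemma Dd_lin_mem a h {z L} : uniq L -> z \in L ->
  Dd (fun x => (x - a) * h x) L = (z - a) * Dd h L + Dd h (rem z L).
Proof.
move=> uL zL; have pe := perm_to_rem zL.
rewrite (Dd_perm _ _ _ pe) (Dd_perm h _ _ pe) Dd_lin //.
by rewrite -(perm_uniq pe).
Qed.

Lemma Dd_rec h {z1 z2 L} : uniq L -> z1 \in L -> z2 \in L ->
  (z1 - z2) * Dd h L = Dd h (rem z2 L) - Dd h (rem z1 L).
Proof.
move=> uL z1L z2L.
have := Dd_lin_mem 0 h uL z1L; rewrite (Dd_lin_mem 0 h uL z2L) !subr0 => E.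
move: E; set D := Dd h L; set A := Dd h (rem z1 L); set B := Dd h (rem z2 L).
move=> E; apply/eqP; rewrite -subr_eq0; apply/eqP.
transitivity ((z1 * D + A) - (z2 * D + B)); first by ring.
by rewrite E subrr.
Qed.

Lemma Dd_const c n L : uniq L -> size L = n.+2 -> Dd (fun=> c) L = 0.
Proof.
elim: n L => [|n IH] L uL.
  case: L uL => [|x [|y [|]]] //= /andP[xy _] _; move: xy; rewrite inE => xy.
  rewrite /Dd !big_cons !big_nil /= !eqxx xy eq_sym xy /= !mulr1.
  have nz : x - y != 0 by rewrite subr_eq0.
  have -> : y - x = - (x - y) by ring.
  by rewrite invrN mulrN addr0 subrr.
case: L uL => [|x [|y L]] // uL /= [sL].
have xL : x \in x :: y :: L by rewrite inE eqxx.
have yL : y \in x :: y :: L by rewrite !inE eqxx orbT.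
have xy : x != y by move: (uL) => /= /andP[]; rewrite inE negb_or => /andP[].
have := Dd_rec (fun=> c) uL xL yL.
have h1 : Dd (fun=> c) (rem x [:: x, y & L]) = 0.
  by apply: IH; [exact: rem_uniq | rewrite size_rem //= sL].
have h2 : Dd (fun=> c) (rem y [:: x, y & L]) = 0.
  by apply: IH; [exact: rem_uniq | rewrite size_rem //= sL].
rewrite h1 h2 subrr.
by move/eqP; rewrite mulf_eq0 subr_eq0 (negbTE xy) /= => /eqP.
Qed.

Lemma pospowS (u : R) m : pospow u m.+1 = u * pospow u m.
Proof. by rewrite /pospow; case: ifP => _; rewrite ?exprS ?mulr0. Qed.

Lemma pospow0_ge0 (u : R) m : 0 <= pospow u m.
Proof. by rewrite /pospow; case: ifP => // /ltW u0; rewrite exprn_ge0. Qed.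

Lemma Dd_zero m a L : uniq L -> (m.+2 <= size L)%N -> (forall x, x \in L -> a < x) ->
  Dd (fun x => pospow (x - a) m) L = 0.
Proof.
elim: m L => [|m IH] L uL sL aL.
  rewrite (@Dd_ext _ (fun=> 1)); last first.
    by move=> x /aL ax; rewrite /pospow subr_gt0 ax expr0.
  case: L uL sL {aL} => [|x L] uL //= sL.
  by apply: (@Dd_const _ (size L).-1) => //=; rewrite prednK.
rewrite (@Dd_ext _ (fun x => (x - a) * pospow (x - a) m)); last first.
  by move=> x _; rewrite pospowS.
case: L uL sL aL => [|x L] // uL sL aL.
have uL' : uniq L by move: (uL) => /= /andP[].
have aL' : forall y, y \in L -> a < y by move=> y yL; apply: aL; rewrite inE yL orbT.
rewrite Dd_lin // !IH //; rewrite ?mulr0 ?addr0 //.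
all: try by move: sL => /= /ltnW.
all: try by apply: ltnW.
Qed.

Lemma seq_min x0 L : exists2 z, z \in x0 :: L & forall y, y \in x0 :: L -> z <= y.
Proof.
elim: L x0 => [|x L IH] x0.
  by exists x0; rewrite ?inE ?eqxx // => y; rewrite inE => /eqP ->.
have [z zL zmin] := IH x.
have [x0z|zx0] := leP x0 z.
  exists x0; first by rewrite inE eqxx.
  move=> y; rewrite inE => /orP[/eqP -> //|/zmin]; exact: le_trans.
exists z; first by rewrite inE zL orbT.
move=> y; rewrite inE => /orP[/eqP ->|/zmin //]; exact: ltW.
Qed.

Lemma seq_max x0 L : exists2 z, z \in x0 :: L & forall y, y \in x0 :: L -> y <= z.
Proof.
elim: L x0 => [|x L IH] x0.
  by exists x0; rewrite ?inE ?eqxx // => y; rewrite inE => /eqP ->.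
have [z zL zmax] := IH x.
have [x0z|zx0] := leP x0 z.
  exists z; first by rewrite inE zL orbT.
  move=> y; rewrite inE => /orP[/eqP -> //|/zmax //].
exists x0; first by rewrite inE eqxx.
move=> y; rewrite inE => /orP[/eqP -> //|/zmax yz]; exact: (le_trans yz (ltW zx0)).
Qed.

Lemma Dd_pospow_ge0 m a L : uniq L -> size L = m.+2 ->
  0 <= Dd (fun x => pospow (x - a) m) L.
Proof.
elim: m a L => [|m IH] a L uL sL.
  case: L uL sL => [|x [|y [|]]] //= /andP[xy _] _; move: xy; rewrite inE => xy.
  rewrite /Dd !big_cons !big_nil /= !eqxx xy eq_sym xy /= !mulr1 !addr0.
  have -> : y - x = - (x - y) by ring.
  rewrite invrN mulrN -mulrBl.
  rewrite /pospow !expr0.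
  have [xly|ylx] := ltP x y.
    have d0 : x - y < 0 by rewrite subr_lt0.
    apply: mulr_le0 ; last by rewrite invr_le0 ltW.
    case: ifP => hx; case: ifP => hy; rewrite ?subrr ?subr0 ?sub0r ?oppr_le0 //.
    by move: hx hy; rewrite !subr_gt0 => hx /negbT; rewrite -leNgt => hy; lra.
  have d0 : 0 < x - y by rewrite subr_gt0 lt_neqAle eq_sym xy ylx.
  apply: mulr_ge0; last by rewrite invr_ge0 ltW.
  case: ifP => hx; case: ifP => hy; rewrite ?subrr ?subr0 ?sub0r ?oppr_ge0 //.
  by move: hx hy; rewrite !subr_gt0 => /negbT; rewrite -leNgt => hx hy; lra.
case: L uL sL => [|x0 L0] // uL sL.
have [zm zmL zmin] := seq_min x0 L0.
have [zM zML zmax] := seq_max x0 L0.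
set L := x0 :: L0 in uL sL zmL zmin zML zmax *.
have [azm|zma] := ltP a zm.
  rewrite Dd_zero //; first by rewrite sL.
  by move=> y /zmin; apply: lt_le_trans.
have [zMa|azM] := leP zM a.
  rewrite (@Dd_ext _ (fun=> 0)) ?Dd0 //.
  move=> y /zmax yM; rewrite /pospow; case: ifP => // ; rewrite subr_gt0.
  by move=> ay; move: (lt_le_trans ay (le_trans yM zMa)); rewrite ltxx.
rewrite (@Dd_ext _ (fun x => (x - a) * pospow (x - a) m)); last first.
  by move=> x _; rewrite pospowS.
have hA : 0 <= Dd (fun x => pospow (x - a) m) (rem zm L).
  by apply: IH; [exact: rem_uniq | rewrite size_rem // sL].
have hB : 0 <= Dd (fun x => pospow (x - a) m) (rem zM L).
  by apply: IH; [exact: rem_uniq | rewrite size_rem // sL].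
set D := Dd (fun x => pospow (x - a) m) L.
have [D0|D0] := leP 0 D.
  rewrite (Dd_lin_mem _ _ uL zML); apply: addr_ge0 => //.
  by apply: mulr_ge0 => //; rewrite subr_ge0 ltW.
rewrite (Dd_lin_mem _ _ uL zmL); apply: addr_ge0 => //.
by apply: mulr_le0; rewrite ?subr_le0 // ltW.
Qed.

Lemma divdiffE n f (x : 'I_n.+1 -> R) : injective x ->
  divdiff f x = Dd f (map x (index_enum 'I_n.+1)).
Proof.
move=> xinj; rewrite /divdiff /Dd big_map; apply: eq_bigr => i _.
congr (_ / _); rewrite big_map; apply: eq_bigl => j.
by rewrite (inj_eq xinj).
Qed.

Lemma inMk_fex k (p : \bar R) (beta eps : R) : (1 <= k)%N -> inMk k (fex k p beta eps).
Proof.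
move=> k1 x xinj _; rewrite divdiffE //.
rewrite (@Dd_ext _ (fun y => eps `^ (- k%:R - beta - invp p + 1) *
   pospow (y - (1 - eps)) k.-1)); last first.
  by move=> y _; rewrite /fex; congr (_ * pospow _ _); ring.
rewrite Dd_scale; apply: mulr_ge0; first exact: powR_ge0.
apply: Dd_pospow_ge0.
  by rewrite map_inj_uniq // index_enum_uniq.
rewrite size_map prednK //.
by rewrite -[RHS](card_ord k.+1) cardE /enum_mem size_filter count_predT.
Qed.

End DD.


Section Gen.
Variable R : realType.
Local Notation mu := (@lebesgue_measure R).

Lemma le_int0 (D : set R) (f g : R -> \bar R) :
  (forall x, D x -> (0 <= f x)%E) -> (forall x, D x -> (f x <= g x)%E) ->
  (\int[mu]_(x in D) f x <= \int[mu]_(x in D) g x)%E.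
Proof.
move=> f0 fg.
have g0 : forall x, D x -> (0 <= g x)%E.
  by move=> x Dx; exact: le_trans (f0 _ Dx) (fg _ Dx).
rewrite (ge0_integralE mu f0) (ge0_integralE mu g0).
apply: ereal_sup_le => _ [h hf <-]; exists h; last by [].
move=> x /=; exact: le_trans (hf x) (lee_restrict fg x).
Qed.

Lemma int_ge_indic (A : set R) (c : R) (F : R -> \bar R) :
  measurable A -> 0 <= c -> (forall x, A x -> (c%:E <= F x)%E) ->
  (forall x, (0 <= F x)%E) ->
  (c%:E * mu A <= \int[mu]_x F x)%E.
Proof.
move=> mA c0 cF F0.
have -> : (c%:E * mu A = \int[mu]_x (c * \1_A x)%:E)%E.
  rewrite (@integralZl_indic _ _ _ mu setT measurableT (fun=> A) c) //.
    by rewrite integral_indic // setIT.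
  by move=> /lt_le_trans /(_ c0); rewrite ltxx.
apply: le_int0 => x _.
  by rewrite lee_fin mulr_ge0 // /indic; case: (x \in A).
rewrite /indic; case: (boolP (x \in A)) => xA.
  by rewrite mulr1; apply: cF; rewrite inE in xA.
by rewrite mulr0.
Qed.

Lemma muT_gt0 : (0 < mu [set: R])%E.
Proof.
apply: (@lt_le_trans _ _ (mu `[0, 1]%classic)).
  by rewrite lebesgue_measure_itv /= lte_fin ltr01 oppr0 adde0 lte_fin ltr01.
by rewrite le_measure ?inE //; exact: measurable_itv.
Qed.

Lemma normL_lb (p : \bar R) (S : set R) (g : R -> R) (a b c0 : R) :
  (0 < p)%E -> a < b -> `[a, b] `<=` S -> 0 <= c0 ->
  (forall x, a <= x <= b -> c0 <= `|g x|) ->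
  ((c0 * (b - a) `^ invp p)%:E <= normL p S g)%E.
Proof.
move=> p0 ab abS c00 cg.
have mab : mu `[a, b]%classic = (b - a)%:E.
  by rewrite lebesgue_measure_itv /= lte_fin ab EFinB.
have Sx x : a <= x <= b -> S x by move=> h; apply: abS; rewrite /= in_itv /= h.
case: p p0 => [r||] //; rewrite ?lte_fin => r0.
  rewrite /normL unlock /=.
  have -> : c0 * (b - a) `^ r^-1 = (c0 `^ r * (b - a)) `^ r^-1.
    rewrite powRM; last by rewrite subr_ge0 ltW.
      by rewrite -powRrM mulfV ?gt_eqF // powRr1.
    exact: powR_ge0.
  rewrite -poweR_EFin; apply: gt0_ler_poweR.
  - by rewrite invr_ge0 ltW.
  - rewrite in_itv /= leey andbT lee_fin; apply: mulr_ge0; first exact: powR_ge0.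
    by rewrite subr_ge0 ltW.
  - rewrite in_itv /= leey andbT; apply: integral_ge0 => x _.
    by rewrite /= ?poweR_EFin lee_fin powR_ge0.
  rewrite EFinM -mab; apply: int_ge_indic.
  - exact: measurable_itv.
  - exact: powR_ge0.
  - move=> x; rewrite /= in_itv /= => xab.
    rewrite /indic; have -> : x \in S by rewrite inE; apply: Sx.
    rewrite mul1r /= ?poweR_EFin lee_fin; apply: ge0_ler_powR.
    all: rewrite ?nnegrE ?normr_ge0 //.
    all: try exact: ltW.
    all: try exact: cg.
rewrite /normL unlock /= muT_gt0 powRr0 mulr1.
apply: le_ereal_inf_tmp => y /= [N [mN N0 sN]].
rewrite leNgt; apply/negP => yc.
have sub : `[a, b]%classic `<=` N.
  move=> x /= xab; apply: sN => /=; rewrite /indic.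
  have xab' : a <= x <= b by move: xab; rewrite in_itv.
  have -> : x \in S by rewrite inE; apply: Sx.
  rewrite mul1r /= => le; move: (le_lt_trans le yc); rewrite lte_fin.
  by rewrite ltNge cg.
have : (mu `[a, b]%classic <= mu N)%E.
  by rewrite le_measure ?inE //; exact: measurable_itv.
by rewrite N0 mab lee_fin subr_le0 leNgt ab.
Qed.

Lemma normL_ub_oo (S : set R) (g : R -> R) (C : R) :
  0 <= C -> (forall x, S x -> `|g x| <= C) -> (normL +oo%E S g <= C%:E)%E.
Proof.
move=> C0 gC; rewrite /normL unlock /=; case: ifP => _; last by rewrite lee_fin.
apply/ess_supP; apply: nearW => x /=; rewrite /indic.
case: (boolP (x \in S)) => xS; rewrite ?mul1r ?mul0r /= lee_fin ?normr0 //.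
by apply: gC; rewrite inE in xS.
Qed.

Lemma normL_ub_r (r : R) (S : set R) (g : R -> R) (M : R) :
  0 < r -> 0 <= M ->
  (\int[mu]_x (`|(\1_S x * g x)%:E| `^ r) <= M%:E)%E ->
  (normL r%:E S g <= (M `^ r^-1)%:E)%E.
Proof.
move=> r0 M0 h; rewrite /normL unlock /= -poweR_EFin; apply: gt0_ler_poweR => //.
- by rewrite invr_ge0 ltW.
- rewrite in_itv /= leey andbT; apply: integral_ge0 => x _.
  by rewrite /= ?poweR_EFin lee_fin powR_ge0.
- by rewrite in_itv /= lee_fin M0 leey.
Qed.

End Gen.


Section Dyadic.
Variable R : realType.
Local Notation mu := (@lebesgue_measure R).
Local Notation h := (2^-1 : R).

Lemma h_gt0 : 0 < h. Proof. by rewrite invr_gt0. Qed.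
Lemma h_lt1 : h < 1. Proof. by rewrite invf_lt1 // ltr1n. Qed.

Lemma hexpS n : h ^+ n = 2 * h ^+ n.+1.
Proof. by rewrite exprS mulrA mulfV ?mul1r // pnatr_eq0. Qed.

Lemma powR_succ (y s : R) : 0 < y -> y `^ s * y = y `^ (s + 1).
Proof.
move=> y0; rewrite powRD ?(gt_eqF y0) ?implybT // powRr1 // ?ltW //. all: match goal with |- ?G => idtac G end.
Qed.

Lemma powR_exprn (y t : R) n : 0 <= y -> (y ^+ n) `^ t = (y `^ t) ^+ n.
Proof.
move=> y0; rewrite -powR_mulrn // -powRrM mulrC powRrM powR_mulrn //.
exact: powR_ge0.
Qed.

Lemma find_j (e t : R) : 0 < t -> t <= e ->
  exists j, e * h ^+ j.+1 < t <= e * h ^+ j.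
Proof.
move=> t0 te.
have e0 : 0 < e by exact: lt_le_trans te.
have [N hN] : exists N, e * h ^+ N < t.
  exists (Num.trunc (e / t)).+1.
  set M := Num.trunc (e / t).
  have h1 : e / t < M.+1%:R by exact: truncnS_gt.
  have h2 : (M.+1%:R : R) <= 2 ^+ M.+1.
    by rewrite -natrX ler_nat ltnW // ltn_expl.
  have h3 : e < 2 ^+ M.+1 * t.
    by rewrite -ltr_pdivrMr //; exact: lt_le_trans h1 h2.
  by rewrite exprVn ltr_pdivrMr ?exprn_gt0 // mulrC.
pose P n := t <= e * h ^+ n.
have P0 : exists i, P i by exists 0%N; rewrite /P expr0 mulr1.
have ub : forall i, P i -> (i <= N)%N.
  move=> i; rewrite /P => Pi; rewrite leqNgt; apply/negP => Ni.
  have : h ^+ i <= h ^+ N.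
    rewrite -(subnKC (ltnW Ni)) exprD -[leRHS]mulr1.
    apply: ler_wpM2l; first by rewrite exprn_ge0 // ltW // h_gt0.
    by rewrite exprn_ile1 // ltW // ?h_gt0 ?h_lt1.
  move=> hle; have := le_trans Pi (ler_wpM2l (ltW e0) hle).
  by rewrite leNgt hN.
case: (ex_maxnP P0 ub) => j Pj maxj.
exists j; apply/andP; split; last exact: Pj.
rewrite ltNge; apply/negP => Pj1.
by have := maxj j.+1 Pj1; rewrite ltnn.
Qed.

Lemma ratio_bound (y t s : R) : 0 < y -> y < t -> t <= 2 * y ->
  t `^ s <= y `^ s * expR (`|s| * ln 2).
Proof.
move=> y0 yt t2y.
have u0 : 0 < t / y by rewrite divr_gt0 // (lt_trans y0 yt).
rewrite {1}(_ : t = y * (t / y)); last by rewrite mulrC divfK // gt_eqF.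
rewrite powRM ?(ltW y0) ?(ltW u0) //; apply: ler_wpM2l; first exact: powR_ge0.
rewrite /powR gt_eqF // ler_expR.
have l0 : 0 <= ln (t / y) by apply: ln_ge0; rewrite ler_pdivlMr // mul1r ltW.
have l2 : ln (t / y) <= ln 2.
  by rewrite ler_ln ?posrE // ler_pdivrMr // mulrC.
apply: (@le_trans _ _ (`|s| * ln (t / y))).
  by apply: ler_wpM2r => //; exact: ler_norm.
by apply: ler_wpM2l => //; exact: normr_ge0.
Qed.

Lemma indic_ge0 (A : set R) x : 0 <= (\1_A x : R).
Proof. by rewrite /indic; case: (x \in A). Qed.

Lemma int_cst_indic (A : set R) (c : R) : measurable A -> 0 <= c ->
  (\int[mu]_x (c * \1_A x)%:E = c%:E * mu A)%E.
Proof.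
move=> mA c0.
rewrite (@integralZl_indic _ _ _ mu setT measurableT (fun=> A) c) //.
  by rewrite integral_indic // setIT.
by move=> /lt_le_trans /(_ c0); rewrite ltxx.
Qed.

Lemma dyadic (e s K : R) (F : R -> R) :
  0 < e -> -1 < s -> 0 <= K -> (forall x, 0 <= F x) ->
  (forall x, x <= 1 - e \/ 1 < x -> F x = 0) ->
  (forall x, 1 - e < x < 1 -> F x <= K * (1 - x) `^ s) ->
  (\int[mu]_x (F x)%:E <=
    (K * expR (`|s| * ln 2) * e `^ (s + 1) / (1 - h `^ (s + 1)))%:E)%E.
Proof.
move=> e0 s1 K0 F0 Fout Fin.
set B2 := expR (`|s| * ln 2).
set rho := h `^ (s + 1).
have B20 : 0 <= B2 by exact: expR_ge0.
have rho0 : 0 < rho by apply: powR_gt0; exact: h_gt0.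
have rho1 : rho < 1.
  rewrite /rho /powR gt_eqF ?h_gt0 // expR_lt1 pmulr_rlt0; last by lra.
  by apply: ln_lt0; rewrite h_gt0 h_lt1.
pose I j : set R := `[1 - e * h ^+ j, 1 - e * h ^+ j.+1[%classic.
pose c j := K * B2 * (e * h ^+ j.+1) `^ s.
have c0 j : 0 <= c j by rewrite /c !mulr_ge0 ?powR_ge0.
pose f n x : \bar R := if n is j.+1 then (c j * \1_(I j) x)%:E
                       else (F 1 * \1_[set 1] x)%:E.
have f0 n x : (0 <= f n x)%E.
  by case: n => [|j] /=; rewrite lee_fin mulr_ge0 ?indic_ge0.
apply: (@le_trans _ _ (\int[mu]_x (\sum_(0 <= n <oo) f n x))%E).
  apply: le_int0 => x _; first by rewrite lee_fin.
  have [x1|x1] := ltP 1 x.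
    by rewrite Fout ?x1 ?orbT //; [exact: nneseries_ge0 | right].
  have [xe|xe] := leP x (1 - e).
    by rewrite Fout //; [exact: nneseries_ge0 | left].
  have [->|xn1] := eqVneq x 1.
    apply: (le_trans _ (@nneseries_lim_ge _ (f^~ 1) xpredT 0 1 _)); last first.
      by move=> n _ _; exact: f0.
    by rewrite big_nat1 /= /indic mem_set // mulr1.
  have xl1 : x < 1 by rewrite lt_neqAle xn1 x1.
  have [j /andP[j1 j2]] := @find_j e (1 - x) ltac:(lra) ltac:(lra).
  apply: (le_trans _ (@nneseries_lim_ge _ (f^~ x) xpredT 0 j.+2 _)); last first.
    by move=> n _ _; exact: f0.
  rewrite big_nat_recr //=.
  apply: lee_paddl; first by apply: sume_ge0 => n _; exact: f0.
  rewrite /indic mem_set; last first.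
    by rewrite /I /= in_itv /=; apply/andP; split; lra.
  have hx : 1 - e < x < 1 by apply/andP; split; lra.
  rewrite mulr1 lee_fin; apply: (le_trans (Fin x hx)).
  rewrite /c -mulrA; apply: ler_wpM2l => //.
  rewrite mulrC; apply: ratio_bound.
  - by rewrite mulr_gt0 // exprn_gt0 // h_gt0.
  - by [].
  - by rewrite mulrCA -hexpS.
rewrite integral_nneseries //; last first.
  case=> [|j] /=; apply/measurable_realfun.measurable_EFinP; apply: measurable_realfun.measurable_funM.
  - exact: measurable_cst.
  - by apply: measurable_realfun.measurable_indic; exact: measurable_set1.
  - exact: measurable_cst.
  - by apply: measurable_realfun.measurable_indic; exact: measurable_itv.
have intf n : (\int[mu]_x f n x =
    (if n is j.+1 then K * B2 * e `^ (s + 1) * rho ^+ j.+1 else 0)%:E)%E.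
  case: n => [|j] /=.
    rewrite int_cst_indic //.
    by rewrite lebesgue_measure_set1 mule0.
  rewrite int_cst_indic //; last exact: measurable_itv.
  have hj : 0 < e * h ^+ j.+1 by rewrite mulr_gt0 // exprn_gt0 // h_gt0.
  rewrite lebesgue_measure_itv /= lte_fin.
  have -> : (1 - e * h ^+ j < 1 - e * h ^+ j.+1) = true.
    by apply/idP; rewrite (hexpS j); lra.
  rewrite -EFinB -EFinM /c.
  have -> : 1 - e * h ^+ j.+1 - (1 - e * h ^+ j) = e * h ^+ j.+1.
    by rewrite (hexpS j); ring.
  congr (_%:E).
  transitivity (K * B2 * ((e * h ^+ j.+1) `^ s * (e * h ^+ j.+1))).
    by rewrite mulrA.
  rewrite (powR_succ _ s hj) powRM ?(ltW e0) ?exprn_ge0 ?(ltW h_gt0) //.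
  by rewrite powR_exprn ?(ltW h_gt0) // mulrA.
under eq_eseriesr do rewrite intf.
apply: lime_le.
  apply: is_cvg_nneseries => -[|j] _ _ /=; rewrite lee_fin //.
  apply: mulr_ge0; first by rewrite !mulr_ge0 // powR_ge0.
  by rewrite exprn_ge0 // ltW.
apply: nearW => N; rewrite sumEFin lee_fin.
set K' := K * B2 * e `^ (s + 1).
have K'0 : 0 <= K' by rewrite !mulr_ge0 ?powR_ge0.
apply: (@le_trans _ _ (series (geometric K' rho) N)).
  rewrite /series /=; apply: ler_sum => n _.
  case: n => [|j]; rewrite /geometric /=; first by rewrite expr0 mulr1.
  by [].
apply: le_trans (geometric_le_lim _ K'0 rho0 _); last by rewrite ger0_norm ?ltW.
by [].
Qed.

End Dyadic.


Section Main.
Variable R : realType.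

Lemma pow_lb (y t g : R) : 0 < y -> y <= t -> t <= 2 * y ->
  y `^ g * expR (- (`|g| * ln 2)) <= t `^ g.
Proof.
move=> y0 yt t2y.
have u0 : 0 < t / y by rewrite divr_gt0 // (lt_le_trans y0 yt).
have -> : t `^ g = y `^ g * (t / y) `^ g.
  by rewrite -powRM ?(ltW y0) ?(ltW u0) // mulrC divfK // gt_eqF.
apply: ler_wpM2l; first exact: powR_ge0.
rewrite /powR gt_eqF // ler_expR.
have l0 : 0 <= ln (t / y) by apply: ln_ge0; rewrite ler_pdivlMr // mul1r.
have l2 : ln (t / y) <= ln 2 by rewrite ler_ln ?posrE // ler_pdivrMr // mulrC.
apply: (@le_trans _ _ (- (`|g| * ln (t / y)))).
  by rewrite lerN2; apply: ler_wpM2l => //; exact: normr_ge0.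
rewrite -mulNr; apply: ler_wpM2r => //; rewrite lerNl -normrN; exact: ler_norm.
Qed.

Lemma pow_ub (y t g : R) : 0 < y -> y <= t -> t <= 2 * y ->
  t `^ g <= y `^ g * expR (`|g| * ln 2).
Proof.
move=> y0 yt t2y.
have u0 : 0 < t / y by rewrite divr_gt0 // (lt_le_trans y0 yt).
have -> : t `^ g = y `^ g * (t / y) `^ g.
  by rewrite -powRM ?(ltW y0) ?(ltW u0) // mulrC divfK // gt_eqF.
apply: ler_wpM2l; first exact: powR_ge0.
rewrite /powR gt_eqF // ler_expR.
have l0 : 0 <= ln (t / y) by apply: ln_ge0; rewrite ler_pdivlMr // mul1r.
have l2 : ln (t / y) <= ln 2 by rewrite ler_ln ?posrE // ler_pdivrMr // mulrC.
apply: (@le_trans _ _ (`|g| * ln (t / y))).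
  by apply: ler_wpM2r => //; exact: ler_norm.
by apply: ler_wpM2l => //; exact: normr_ge0.
Qed.

Lemma wlo (a x : R) : 0 <= x <= 1 -> expR (- (`|a| * ln 2)) <= (1 + x) `^ a.
Proof.
move=> /andP[x0 x1]; have := @pow_lb 1 (1 + x) a ltr01 ltac:(lra) ltac:(lra).
by rewrite powR1 mul1r.
Qed.

Lemma whi (a x : R) : 0 <= x <= 1 -> (1 + x) `^ a <= expR (`|a| * ln 2).
Proof.
move=> /andP[x0 x1]; have := @pow_ub 1 (1 + x) a ltr01 ltac:(lra) ltac:(lra).
by rewrite powR1 mul1r.
Qed.

Lemma lam_prod (e b ip : R) k : 0 < e -> (1 <= k)%N ->
  e `^ b * e `^ (- k%:R - b - ip + 1) * e ^+ k.-1 = e `^ (- ip).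
Proof.
move=> e0 k1; have en : e != 0 by rewrite gt_eqF.
rewrite -powR_mulrn ?ltW // -!powRD ?en ?implybT //; congr (_ `^ _).
by rewrite -{1}(prednK k1) -natr1; ring.
Qed.

Lemma pospow_pos (u : R) m : 0 < u -> pospow u m = u ^+ m.
Proof. by move=> u0; rewrite /pospow u0. Qed.

Lemma pospow_npos (u : R) m : u <= 0 -> pospow u m = 0.
Proof. by move=> u0; rewrite /pospow ltNge u0. Qed.

Lemma wab_ge0 a b (x : R) : 0 <= wab a b x.
Proof. by rewrite /wab mulr_ge0 ?powR_ge0. Qed.

Lemma fex_ge0 k p b e (x : R) : 0 <= fex k p b e x.
Proof. by rewrite /fex mulr_ge0 ?powR_ge0 ?pospow0_ge0. Qed.

End Main.


Section Parts.
Variable R : realType.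

Lemma part_lb k (p : \bar R) (al be e : R) : (1 <= k)%N -> (0 < p)%E -> 0 < e -> e <= 1 ->
  (((expR (- (`|al| * ln 2)) * ((4^-1) `^ be * expR (- (`|be| * ln 2)))
     * (2^-1) ^+ k.-1) * (4^-1) `^ invp p)%:E
   <= norm11 p (fun x => (wab al be x * fex k p be e x)%R))%E.
Proof.
move=> k1 p0 e0 e1.
set ip := invp p.
set Alo := expR (- (`|al| * ln 2)).
set Eb := expR (- (`|be| * ln 2)).
set K1 := Alo * ((4^-1) `^ be * Eb) * (2^-1) ^+ k.-1.
set lam := e `^ (- k%:R - be - ip + 1).
have K10 : 0 <= K1.
  by rewrite /K1 !mulr_ge0 ?expR_ge0 ?powR_ge0 ?exprn_ge0 ?invr_ge0.
have := @normL_lb R p [set x | -1 <= x <= 1]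
  (fun x => wab al be x * fex k p be e x) (1 - e / 2) (1 - e / 4)
  (K1 * e `^ (- ip)) p0 ltac:(lra).
move=> H.
have cg : forall x, 1 - e / 2 <= x <= 1 - e / 4 ->
    K1 * e `^ (- ip) <= `|wab al be x * fex k p be e x|.
  move=> x /andP[xa xb].
  rewrite ger0_norm; last by apply: mulr_ge0; [exact: wab_ge0 | exact: fex_ge0].
  have xp : 0 < x - 1 + e by lra.
  rewrite /wab /fex (@pospow_pos _ _ _ xp) -/ip -/lam.
  have E : K1 * e `^ (- ip) =
      Alo * ((e * 4^-1) `^ be * Eb) * (lam * (e * 2^-1) ^+ k.-1).
    rewrite -(@lam_prod _ e be ip k e0 k1) -/lam /K1 powRM ?(ltW e0) ?invr_ge0 //.
    by rewrite exprMn; ring.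
  rewrite E; apply: ler_pM.
  + by rewrite !mulr_ge0 ?expR_ge0 ?powR_ge0.
  + by apply: mulr_ge0; [exact: powR_ge0 | apply: exprn_ge0; lra].
  + apply: ler_pM; rewrite ?expR_ge0 ?mulr_ge0 ?powR_ge0 ?expR_ge0 //.
      by apply: wlo; apply/andP; split; lra.
    by apply: pow_lb; lra.
  + apply: ler_wpM2l; first exact: powR_ge0.
    by apply: lerXn2r; rewrite ?nnegrE; lra.
have c00 : 0 <= K1 * e `^ (- ip) by rewrite mulr_ge0 ?powR_ge0.
have sub : `[1 - e / 2, 1 - e / 4] `<=` [set x : R | -1 <= x <= 1].
  by move=> x /=; rewrite in_itv /= => /andP[? ?]; apply/andP; split; lra.
apply: le_trans (H sub c00 cg).
have -> : 1 - e / 4 - (1 - e / 2) = e * 4^-1 by field.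
rewrite powRM ?(ltW e0) ?invr_ge0 // lee_fin.
rewrite -mulrA [e `^ _ * _]mulrA -powRD ?(gt_eqF e0) ?implybT //.
by rewrite addNr powRr0 mul1r.
Qed.

Lemma lam_prod2 (e b ip : R) k : 0 < e -> (1 <= k)%N ->
  e `^ (- k%:R - b - ip + 1) * e ^+ k.-1 = e `^ (- b - ip).
Proof.
move=> e0 k1; have en : e != 0 by rewrite gt_eqF.
rewrite -powR_mulrn ?ltW // -!powRD ?en ?implybT //; congr (_ `^ _).
by rewrite -{1}(prednK k1) -natr1; ring.
Qed.

Lemma part_ub_oo k (al be e : R) : (1 <= k)%N -> 0 <= be -> 0 < e -> e <= 1 ->
  (norm11 +oo%E (fun x => (wab al be x * fex k +oo%E be e x)%R)
    <= (expR (`|al| * ln 2))%:E)%E.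
Proof.
move=> k1 b0 e0 e1; apply: normL_ub_oo; first exact: expR_ge0.
move=> x /andP[xl xu].
rewrite ger0_norm; last by apply: mulr_ge0; [exact: wab_ge0 | exact: fex_ge0].
have [xe|xe] := leP x (1 - e).
  have xp : x - 1 + e <= 0 by lra.
  by rewrite /fex (@pospow_npos _ _ _ xp) !mulr0; exact: expR_ge0.
have xp : 0 < x - 1 + e by lra.
rewrite /wab /fex (@pospow_pos _ _ _ xp).
set lam := e `^ _.
apply: (@le_trans _ _ (expR (`|al| * ln 2) * e `^ be * (lam * e ^+ k.-1))).
  apply: ler_pM.
  - by rewrite mulr_ge0 ?powR_ge0.
  - by apply: mulr_ge0; [exact: powR_ge0 | apply: exprn_ge0; lra].
  - apply: ler_pM; rewrite ?powR_ge0 //; first by apply: whi; apply/andP; split; lra.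
    by apply: ge0_ler_powR; rewrite ?nnegrE //; lra.
  - apply: ler_wpM2l; first exact: powR_ge0.
    by apply: lerXn2r; rewrite ?nnegrE; lra.
have -> : expR (`|al| * ln 2) * e `^ be * (lam * e ^+ k.-1) =
    expR (`|al| * ln 2) * (e `^ be * lam * e ^+ k.-1) by ring.
rewrite /lam (@lam_prod _ e be (invp +oo%E) k e0 k1) /= oppr0 powRr0 mulr1.
exact: lexx.
Qed.

Lemma rho_lt1 (s : R) : -1 < s -> (2^-1 : R) `^ (s + 1) < 1.
Proof.
move=> s1; rewrite /powR gt_eqF ?invr_gt0 // expR_lt1 pmulr_rlt0; last by lra.
by apply: ln_lt0; rewrite invr_gt0 ltr0n /= invf_lt1 // ltr1n.
Qed.

Lemma part_ub_r k (r al be e : R) : (1 <= k)%N -> 0 < r -> - r^-1 < be ->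
  0 < e -> e <= 1 ->
  (norm11 r%:E (fun x => (wab al be x * fex k r%:E be e x)%R) <=
   ((expR (`|al| * ln 2) `^ r * expR (`|be * r| * ln 2)
      / (1 - (2^-1) `^ (be * r + 1))) `^ r^-1)%:E)%E.
Proof.
move=> k1 r0 hb e0 e1.
set s := be * r.
have rr : r * r^-1 = 1 by rewrite mulfV // gt_eqF.
have s1 : -1 < s by rewrite /s; nra.
have rho1 := @rho_lt1 s s1.
set Ahi := expR (`|al| * ln 2).
set B := expR (`|s| * ln 2).
apply: normL_ub_r => //.
  by apply: divr_ge0; [rewrite mulr_ge0 ?powR_ge0 ?expR_ge0 | rewrite subr_ge0 ltW].
set S := [set x : R | -1 <= x <= 1].
set K := (Ahi * e `^ (- be - r^-1)) `^ r.
have K0 : 0 <= K by exact: powR_ge0.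
have F0 : forall x, 0 <= `|\1_S x * (wab al be x * fex k r%:E be e x)| `^ r.
  by move=> x; exact: powR_ge0.
have Fout : forall x, x <= 1 - e \/ 1 < x ->
    `|\1_S x * (wab al be x * fex k r%:E be e x)| `^ r = 0.
  move=> x [xe|x1].
    have xp : x - 1 + e <= 0 by lra.
    rewrite /fex (@pospow_npos _ _ _ xp) !mulr0 normr0 powR0 //.
    by rewrite gt_eqF.
  rewrite /indic; case: (boolP (x \in S)) => [/set_mem /= /andP[_ ?]|_].
    by lra.
  by rewrite mul0r normr0 powR0 // gt_eqF.
have Fin : forall x, 1 - e < x < 1 ->
    `|\1_S x * (wab al be x * fex k r%:E be e x)| `^ r <= K * (1 - x) `^ s.
  move=> x /andP[xl xu].
  have xS : x \in S by rewrite inE /=; apply/andP; split; lra.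
  rewrite /indic xS mul1r.
  rewrite ger0_norm; last by apply: mulr_ge0; [exact: wab_ge0 | exact: fex_ge0].
  have xp : 0 < x - 1 + e by lra.
  rewrite /wab /fex (@pospow_pos _ _ _ xp) /=.
  set lam := e `^ _.
  apply: (@le_trans _ _ ((Ahi * (1 - x) `^ be * (lam * e ^+ k.-1)) `^ r)).
    apply: ge0_ler_powR; rewrite ?nnegrE.
    - exact: ltW.
    - apply: mulr_ge0; first by rewrite mulr_ge0 ?powR_ge0.
      by apply: mulr_ge0; [exact: powR_ge0 | apply: exprn_ge0; lra].
    - by rewrite !mulr_ge0 ?powR_ge0 ?expR_ge0 ?exprn_ge0 ?ltW.
    apply: ler_pM.
    - by rewrite mulr_ge0 ?powR_ge0.
    - by apply: mulr_ge0; [exact: powR_ge0 | apply: exprn_ge0; lra].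
    - apply: ler_pM; rewrite ?powR_ge0 //.
      by apply: whi; apply/andP; split; lra.
    - apply: ler_wpM2l; first exact: powR_ge0.
      by apply: lerXn2r; rewrite ?nnegrE; lra.
  rewrite /lam (@lam_prod2 e be r^-1 k e0 k1).
  have -> : Ahi * (1 - x) `^ be * e `^ (- be - r^-1) =
     (Ahi * e `^ (- be - r^-1)) * (1 - x) `^ be by ring.
  rewrite powRM ?mulr_ge0 ?powR_ge0 ?expR_ge0 // -powRrM.
  exact: lexx.
have D := @dyadic R e s K _ e0 s1 K0 F0 Fout Fin.
apply: le_trans D _.
rewrite lee_fin.
have E : K * e `^ (s + 1) = Ahi `^ r.
  rewrite /K powRM ?powR_ge0 ?expR_ge0 // -powRrM -mulrA -powRD; last first.
    by rewrite (gt_eqF e0) implybT.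
  have -> : (- be - r^-1) * r + (s + 1) = 0.
    by rewrite /s mulrBl mulNr -[r^-1 * r]mulrC rr; ring.
  by rewrite powRr0 mulr1.
rewrite -[K * B * _]mulrA [B * _]mulrC mulrA E.
exact: lexx.
Qed.

Lemma sup_ge (P : R -> Prop) (F : R -> \bar R) h0 : P h0 ->
  (F h0 <= ereal_sup [set y | exists2 h, P h & y = F h])%E.
Proof. by move=> Ph; apply: ereal_sup_ubound; exists h0. Qed.

Lemma delta_bwd_val k (p : \bar R) (be e x hh : R) : (1 <= k)%N -> 0 < e -> e <= 1 ->
  0 < hh -> k%:R * hh = e / 2 -> 1 - e < x -> x <= 1 - e + hh ->
  Delta_bwd k hh (fex k p be e) x = fex k p be e x.
Proof.
move=> k1 e0 e1 hh0 khh xl xu.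
have hhe : hh <= e / 2.
  have : (1 : R) <= k%:R by rewrite ler1n.
  by nra.
rewrite /Delta_bwd /Delta !khh ifT; last first.
  by apply/andP; split; apply/andP; split; lra.
rewrite big_ord_recr /= big1 ?add0r.
  rewrite binn subnn expr0 !mulr1 mul1r khh; congr (fex _ _ _ _ _); lra.
move=> i _ /=.
have ik : (i%:R + 1 : R) <= k%:R by rewrite natr1 ler_nat ltn_ord.
have ih : (i%:R + 1) * hh <= k%:R * hh by apply: ler_wpM2r => //; exact: ltW.
rewrite khh in ih.
have xp : x - e / 2 / 2 - e / 2 / 2 + i%:R * hh - 1 + e <= 0 by nra.
by rewrite /fex (@pospow_npos _ _ _ xp) !mulr0.
Qed.

Lemma part_omega k (p q : \bar R) (al be d e : R) : (1 <= k)%N -> (0 < q)%E ->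
  0 < d -> 0 < e -> e <= 2 * k%:R ^+ 2 * d ^+ 2 -> e <= 1 ->
  (((expR (- (`|al| * ln 2)) * ((2^-1) `^ be * expR (- (`|be| * ln 2)))
     * ((4 * k%:R)^-1) ^+ k.-1 * ((4 * k%:R)^-1) `^ invp q)
     * e `^ (invp q - invp p))%:E
   <= omega k (fex k p be e) d (wab al be) q)%E.
Proof.
move=> k1 q0 d0 e0 eD e1.
set f := fex k p be e.
set w := wab al be.
set D := 2 * k%:R ^+ 2 * d ^+ 2.
have eD' : e <= D by [].
have D0 : 0 < D by rewrite /D !mulr_gt0 // ?exprn_gt0 // ltr0n.
have kR : (1 : R) <= k%:R by rewrite ler1n.
have k0 : (k%:R : R) != 0 by rewrite pnatr_eq0 -lt0n.
rewrite /omega.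
have O1 : (0 <= Omega k f d w q)%E.
  rewrite /Omega; apply: (le_trans _ (@sup_ge _ _ d _)).
    by rewrite /normL; exact: Lnorm_ge0.
  by rewrite d0 lexx.
have O2 : (0 <= Omega_fwd k f d w q)%E.
  rewrite /Omega_fwd -/D; apply: (le_trans _ (@sup_ge _ _ D _)).
    by rewrite /normL; exact: Lnorm_ge0.
  by rewrite D0 lexx.
apply: lee_paddl; first exact: adde_ge0.
set hh := e * (2 * k%:R)^-1.
have hh0 : 0 < hh by rewrite /hh mulr_gt0 // invr_gt0 mulr_gt0 // ltr0n.
have khh : k%:R * hh = e / 2 by rewrite /hh; field; rewrite k0.
have hhe : hh <= e / 2 by nra.
have hh4 : hh / 2 = e * (4 * k%:R)^-1 by rewrite /hh; field; rewrite k0.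
rewrite /Omega_bwd -/D.
apply: (le_trans _ (@sup_ge _ _ hh _)); last by rewrite hh0 /=; lra.
set ip := invp p; set iq := invp q.
set Alo := expR (- (`|al| * ln 2)).
set Eb := expR (- (`|be| * ln 2)).
set K2 := Alo * ((2^-1) `^ be * Eb) * ((4 * k%:R)^-1) ^+ k.-1.
set lam := e `^ (- k%:R - be - ip + 1).
have H := @normL_lb R q [set x | 1 - D <= x <= 1]
  (fun x => w x * Delta_bwd k hh f x) (1 - e + hh / 2) (1 - e + hh)
  (K2 * e `^ (- ip)) q0 ltac:(lra).
have cg : forall x, 1 - e + hh / 2 <= x <= 1 - e + hh ->
    K2 * e `^ (- ip) <= `|w x * Delta_bwd k hh f x|.
  move=> x /andP[xa xb].
  rewrite /f (@delta_bwd_val k p be e x hh k1 e0 e1 hh0 khh ltac:(lra) xb) -/f.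
  rewrite ger0_norm; last by apply: mulr_ge0; [exact: wab_ge0 | exact: fex_ge0].
  have xp : 0 < x - 1 + e by lra.
  rewrite /w /f /wab /fex (@pospow_pos _ _ _ xp) -/ip -/lam.
  have E : K2 * e `^ (- ip) =
      Alo * ((e * 2^-1) `^ be * Eb) * (lam * (e * (4 * k%:R)^-1) ^+ k.-1).
    rewrite -(@lam_prod _ e be ip k e0 k1) -/lam /K2 powRM ?(ltW e0) ?invr_ge0 //.
    by rewrite exprMn; ring.
  rewrite E; apply: ler_pM.
  + by rewrite !mulr_ge0 ?expR_ge0 ?powR_ge0.
  + apply: mulr_ge0; first exact: powR_ge0.
    by apply: exprn_ge0; apply: mulr_ge0; [lra | rewrite invr_ge0 mulr_ge0].
  + apply: ler_pM; rewrite ?expR_ge0 ?mulr_ge0 ?powR_ge0 ?expR_ge0 //.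
      by apply: wlo; apply/andP; split; lra.
    by apply: pow_lb; lra.
  + apply: ler_wpM2l; first exact: powR_ge0.
    apply: lerXn2r; rewrite ?nnegrE; try lra.
have c00 : 0 <= K2 * e `^ (- ip).
  apply: mulr_ge0; last exact: powR_ge0.
  by rewrite !mulr_ge0 ?expR_ge0 ?powR_ge0 ?exprn_ge0 // invr_ge0 mulr_ge0.
have sub : `[1 - e + hh / 2, 1 - e + hh] `<=` [set x : R | 1 - D <= x <= 1].
  by move=> x /=; rewrite in_itv /= => /andP[? ?]; apply/andP; split; lra.
apply: le_trans (H sub c00 cg).
have -> : 1 - e + hh - (1 - e + hh / 2) = e * (4 * k%:R)^-1 by rewrite -hh4; field.
rewrite powRM ?(ltW e0) ?invr_ge0 ?mulr_ge0 // lee_fin.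
rewrite -/iq /K2 powRD ?(gt_eqF e0) ?implybT //.
by rewrite le_eqVlt; apply/orP; left; apply/eqP; ring.
Qed.

End Parts.


Theorem lemma6p4 (R : realType) (k : nat) (p q : \bar R) (alpha beta : R) :
  (1 <= k)%N -> (0 < p)%E -> (0 < q)%E -> in_J p beta ->
  exists c1 c2 c : R, [/\ 0 < c1, 0 < c2, 0 < c &
    forall delta eps : R, 0 < delta -> 0 < eps ->
      eps <= Num.min (2 * k%:R ^+ 2 * delta ^+ 2) 1 ->
      [/\ inMk k (fex k p beta eps),
          (c1%:E <= norm11 p (fun x => (wab alpha beta x * fex k p beta eps x)%R))%E,
          (norm11 p (fun x => (wab alpha beta x * fex k p beta eps x)%R) <= c2%:E)%E &
          ((c * eps `^ (invp q - invp p))%:E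
             <= omega k (fex k p beta eps) delta (wab alpha beta) q)%E]].
Proof.
move=> k1 p0 q0 hJ.
have [c2 [c20 hc2]] : exists c2 : R, 0 < c2 /\ forall eps, 0 < eps -> eps <= 1 ->
    (norm11 p (fun x => (wab alpha beta x * fex k p beta eps x)%R) <= c2%:E)%E.
  case: p p0 hJ => [r||] // p0 hJ.
    rewrite lte_fin in p0; rewrite /in_J /= in hJ.
    have rr : r * r^-1 = 1 by rewrite mulfV // gt_eqF.
    have s1 : -1 < beta * r by nra.
    eexists; split; last first.
      by move=> e e0 e1; exact: part_ub_r.
    apply: powR_gt0; apply: divr_gt0.
      by rewrite mulr_gt0 ?powR_gt0 ?expR_gt0.
    by rewrite subr_gt0; exact: rho_lt1.
  rewrite /in_J in hJ.
  exists (expR (`|alpha| * ln 2)); split; first exact: expR_gt0.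
  by move=> e e0 e1; exact: part_ub_oo.
have k0 : (0 : R) < k%:R by rewrite ltr0n.
eexists; exists c2; eexists; split; last first.
- move=> delta eps d0 e0; rewrite le_min => /andP[eD e1]; split.
  + exact: inMk_fex.
  + exact: part_lb.
  + exact: hc2.
  + exact: part_omega.
- by rewrite !mulr_gt0 ?expR_gt0 ?powR_gt0 ?exprn_gt0 ?invr_gt0 ?mulr_gt0.
- exact: c20.
- by rewrite !mulr_gt0 ?expR_gt0 ?powR_gt0 ?exprn_gt0 ?invr_gt0 ?mulr_gt0.
Qed.
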